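(* Let $\mathcal G$ be a core network with input nodes $\iota_1,\dots,\iota_n$ and output node $o$, and let $\rho_k>\rho_{k+1}$ be two adjacent absolutely super-simple nodes. Then $\mathcal L'_m(\rho_k,\rho_{k+1})=\mathcal L'(\rho_k,\rho_{k+1})$ for every $m=1,\dots,n$.
   Context: Node $b$ is downstream from $a$ (and $a$ upstream from $b$) if there is a directed path from $a$ to $b$. Core network: every node upstream from $o$ and downstream from at least one input. $\mathcal G_m$: nodes downstream from $\iota_m$ and upstream from $o$, with arrows of $\mathcal G$ between them. Simple path: visits each node at most once; $\iota_mo$-simple path: simple path from $\iota_m$ to $o$. A node is $\iota_m$-simple if on some $\iota_mo$-simple path, $\iota_m$-appendage if downstream from $\iota_m$ but not $\iota_m$-simple; absolutely simple/absolutely appendage if $\iota_m$-simple/$\iota_m$-appendage for all $m$. $\iota_m$-super-simple: $\iota_m$-simple and on every $\iota_mo$-simple path; they occur in the same order on all $\iota_mo$-simple paths and adjacent means consecutive. Absolutely super-simple: on every $\iota_mo$-simple path for every $m$; ordered $\rho_1>\cdots>\rho_p>o$ ($b$ after $a$ on every such path), adjacent = consecutive. For a subnetwork $\mathcal K$, $\mathcal K$-path equivalence means directed paths inside $\mathcal K$ both ways. For an $\iota_mo$-simple path $S$: $C_mS$ = nodes of $\mathcal G_m$ not on $S$ with arrows of $\mathcal G_m$ between them; $CS$ = nodes of $\mathcal G$ not on $S$ with arrows of $\mathcal G$ between them. $\mathcal L_m(\rho_k,\rho_{k+1})$: $\iota_m$-simple nodes $\rho$ such that some $\iota_mo$-simple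 path visits $\rho_k,\rho,\rho_{k+1}$ in that order (arrows of $\mathcal G_m$ among them). $\mathcal L(\rho_k,\rho_{k+1})$: absolutely simple nodes $\rho$ such that for some $m$ some $\iota_mo$-simple path visits $\rho_k,\rho,\rho_{k+1}$ in that order. $\mathcal L'_m(\rho_k,\rho_{k+1})$: nodes of $\mathcal L_m(\rho_k,\rho_{k+1})$ together with all $\iota_m$-appendage nodes that are $C_mS_m$-path equivalent to nodes of $\mathcal L_m(\rho_k,\rho_{k+1})$ for some $\iota_mo$-simple path $S_m$, with arrows of $\mathcal G_m$ among them. $\mathcal L'(\rho_k,\rho_{k+1})$ (absolutely super-simple structural subnetwork): nodes of $\mathcal L(\rho_k,\rho_{k+1})$ together with all absolutely appendage nodes that are $CS_m$-path equivalent to nodes in $\mathcal L(\rho_k,\rho_{k+1})$ for some $\iota_mo$-simple path $S_m$ and some $m$, with arrows of $\mathcal G$ among them. *)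

(* Defs.v *)
From mathcomp Require Import all_boot.
Set Implicit Arguments. Unset Strict Implicit. Unset Printing Implicit Defensive.

(* Network: node type V, arrow relation e (e x y = arrow x -> y),
   inputs inp : 'I_n -> V (inp i = iota_{i+1}), output o. *)

Definition well_formed_io (V : finType) (n : nat) (inp : 'I_n -> V) (o : V) : Prop :=
  injective inp /\ (forall m, inp m != o).

Definition downstream (V : finType) (e : rel V) (a b : V) : bool := connect e a b.

Definition core_network (V : finType) (e : rel V) (n : nat) (inp : 'I_n -> V) (o : V)
  : Prop :=
  forall v : V, downstream e v o /\ exists m : 'I_n, downstream e (inp m) v.

Definition simple_path (V : finType) (e : rel V) (a b : V) (p : seq V) : bool :=
  [&& path e a p, last a p == b & uniq (a :: p)].

(* iota_m o-simple path; its node list is inp m :: p *)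
Definition io_path (V : finType) (e : rel V) (n : nat) (inp : 'I_n -> V) (o : V)
  (m : 'I_n) (p : seq V) : bool := simple_path e (inp m) o p.

Definition inGm (V : finType) (e : rel V) (n : nat) (inp : 'I_n -> V) (o : V)
  (m : 'I_n) (v : V) : bool := downstream e (inp m) v && downstream e v o.

Definition is_simple (V : finType) (e : rel V) (n : nat) (inp : 'I_n -> V) (o : V)
  (m : 'I_n) (v : V) : Prop :=
  exists p, io_path e inp o m p /\ v \in inp m :: p.

Definition is_appendage (V : finType) (e : rel V) (n : nat) (inp : 'I_n -> V) (o : V)
  (m : 'I_n) (v : V) : Prop :=
  downstream e (inp m) v /\ ~ is_simple e inp o m v.

Definition abs_simple (V : finType) (e : rel V) (n : nat) (inp : 'I_n -> V) (o : V)
  (v : V) : Prop := forall m, is_simple e inp o m v.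

Definition abs_appendage (V : finType) (e : rel V) (n : nat) (inp : 'I_n -> V) (o : V)
  (v : V) : Prop := forall m, is_appendage e inp o m v.

Definition abs_super_simple (V : finType) (e : rel V) (n : nat) (inp : 'I_n -> V)
  (o : V) (v : V) : Prop :=
  forall m p, io_path e inp o m p -> v \in inp m :: p.

(* a > b in the order of absolutely super-simple nodes: b comes after a on
   every iota_m o-simple path, for every m *)
Definition ss_before (V : finType) (e : rel V) (n : nat) (inp : 'I_n -> V) (o : V)
  (a b : V) : Prop :=
  forall m p, io_path e inp o m p -> index a (inp m :: p) < index b (inp m :: p).

Definition adjacent_abs_ss (V : finType) (e : rel V) (n : nat) (inp : 'I_n -> V)
  (o : V) (a b : V) : Prop :=
  [/\ abs_super_simple e inp o a, abs_super_simple e inp o b, ss_before e inp o a b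
    & ~ exists c, [/\ abs_super_simple e inp o c, ss_before e inp o a c
                   & ss_before e inp o c b]].

Definition Lm (V : finType) (e : rel V) (n : nat) (inp : 'I_n -> V) (o : V)
  (m : 'I_n) (a b v : V) : Prop :=
  exists p, io_path e inp o m p /\
    let s := inp m :: p in
    [/\ a \in s, v \in s, b \in s & index a s <= index v s <= index b s].

Definition Labs (V : finType) (e : rel V) (n : nat) (inp : 'I_n -> V) (o : V)
  (a b v : V) : Prop :=
  abs_simple e inp o v /\ exists m, Lm e inp o m a b v.

Definition path_equiv (V : finType) (e : rel V) (K : {set V}) (x y : V) : Prop :=
  let eK := [rel u w | [&& e u w, u \in K & w \in K]] in
  [/\ x \in K, y \in K, connect eK x y & connect eK y x].

(* C_m S and C S for an iota_m o-simple path S = inp m :: p *)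
Definition CmS (V : finType) (e : rel V) (n : nat) (inp : 'I_n -> V) (o : V)
  (m : 'I_n) (p : seq V) : {set V} :=
  [set v | inGm e inp o m v & v \notin inp m :: p].

Definition CS (n : nat) (V : finType) (inp : 'I_n -> V) (m : 'I_n) (p : seq V)
  : {set V} := [set v | v \notin inp m :: p].

Definition Lpm_node (V : finType) (e : rel V) (n : nat) (inp : 'I_n -> V) (o : V)
  (m : 'I_n) (a b v : V) : Prop :=
  Lm e inp o m a b v \/
  (is_appendage e inp o m v /\
   exists p r, [/\ io_path e inp o m p, Lm e inp o m a b r
                 & path_equiv e (CmS e inp o m p) v r]).

Definition Lpm_arrow (V : finType) (e : rel V) (n : nat) (inp : 'I_n -> V) (o : V)
  (m : 'I_n) (a b x y : V) : Prop :=
  [/\ e x y, Lpm_node e inp o m a b x, Lpm_node e inp o m a b y,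
      inGm e inp o m x & inGm e inp o m y].

Definition Lp_node (V : finType) (e : rel V) (n : nat) (inp : 'I_n -> V) (o : V)
  (a b v : V) : Prop :=
  Labs e inp o a b v \/
  (abs_appendage e inp o v /\
   exists m p r, [/\ io_path e inp o m p, Labs e inp o a b r
                   & path_equiv e (CS inp m p) v r]).

Definition Lp_arrow (V : finType) (e : rel V) (n : nat) (inp : 'I_n -> V) (o : V)
  (a b x y : V) : Prop :=
  [/\ e x y, Lp_node e inp o a b x & Lp_node e inp o a b y].

(* Main.v *)
Require Import Defs.
From mathcomp Require Import all_boot.
Set Implicit Arguments. Unset Strict Implicit. Unset Printing Implicit Defensive.

Section Aux.
Variables (V : finType) (e : rel V) (n : nat) (inp : 'I_n -> V) (o : V).
Hypothesis inpNo : forall m, inp m != o.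

Definition eR (X : pred V) := [rel u w | [&& e u w, X u & X w]].

Lemma path_eR (X : pred V) x p : path e x p -> all X (x :: p) -> path (eR X) x p.
Proof.
elim: p x => //= y p IH x /andP[exy pp] /and3P[Xx Xy Xp].
by rewrite /= exy Xx Xy IH //= Xy.
Qed.

Lemma walk_conn (X : pred V) x p : path e x p -> all X (x :: p) ->
  connect (eR X) x (last x p).
Proof. by move=> pp ap; apply/connectP; exists p => //; apply: path_eR. Qed.

Lemma eR_all (X : pred V) x p : path (eR X) x p -> all X p.
Proof.
elim: p x => //= y p IH x /andP[/and3P[_ _ Xy] pp]; by rewrite Xy (IH y).
Qed.

Lemma eR_sub (X : pred V) : subrel (eR X) e.
Proof. by move=> x y /and3P[]. Qed.

Lemma conn_eR_e (X : pred V) x y : connect (eR X) x y -> connect e x y.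
Proof.
move/connectP=> [p pp ->]; apply/connectP; exists p => //; exact: sub_path (@eR_sub X) _ _ pp.
Qed.

Lemma conn_mono (X Y : pred V) x y : (forall z, X z -> Y z) ->
  connect (eR X) x y -> connect (eR Y) x y.
Proof.
move=> XY; apply: connect_sub => u w /and3P[euw Xu Xw]; apply: connect1.
by rewrite /= euw !XY.
Qed.

Lemma ex_path m : downstream e (inp m) o -> exists p, io_path e inp o m p.
Proof.
move/connectP=> [p pp ->]; case: (shortenP pp) => p' pp' up' _.
by exists p'; rewrite /io_path /simple_path pp' up' eqxx.
Qed.

Lemma noavoid a m p : abs_super_simple e inp o a -> path e (inp m) p ->
  last (inp m) p = o -> a \notin inp m :: p -> False.
Proof.
move=> ss pp lp; case: (shortenP pp) lp => p' pp' up' sub lp.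
have : io_path e inp o m p' by rewrite /io_path /simple_path pp' up' lp eqxx.
move/ss; rewrite !inE => /orP[->//|/sub ->]; by rewrite orbT.
Qed.

Lemma noavoidC a m : abs_super_simple e inp o a ->
  connect (eR (predC1 a)) (inp m) o -> False.
Proof.
move=> ss /connectP[p pp lp]; apply: (@noavoid a m p ss).
- exact: sub_path (@eR_sub _) _ _ pp.
- by [].
case: p pp lp => [|y p] /=; first by move=> _ E; move: (inpNo m); rewrite E eqxx.
move=> /andP[/and3P[_ Xx Xy] pp] _; rewrite inE negb_or eq_sym Xx /=.
have := eR_all pp; rewrite inE negb_or eq_sym Xy /= => /allP Hp.
by apply/negP => /Hp; rewrite /= eqxx.
Qed.


Lemma IDX (s1 s2 : seq V) x y : uniq (s1 ++ s2) -> x \in s2 -> y \in s1 ++ s2 ->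
  (index x (s1 ++ s2) <= index y (s1 ++ s2)) = (y \in s2) && (index x s2 <= index y s2).
Proof.
rewrite cat_uniq => /and3P[_ /hasPn H _] xs2; rewrite !index_cat mem_cat.
have -> : (x \in s1) = false by apply: negbTE; apply: H.
case: ifP => ys1 /=.
  have -> : (y \in s2) = false by apply: negbTE; apply/negP => /H; rewrite ys1.
  by move=> _; rewrite andFb; apply: negbTE; rewrite -ltnNge ltn_addr // index_mem.
by move=> ys2; rewrite ys2 leq_add2l.
Qed.

Lemma decomp (x a : V) (p1 p2 : seq V) : last x p1 = a -> x :: (p1 ++ p2) = belast x p1 ++ a :: p2.
Proof. by move=> <-; rewrite -cat_rcons -lastI. Qed.

Lemma io_split m p1 p2 a : io_path e inp o m (p1 ++ p2) -> last (inp m) p1 = a ->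
  [/\ path e (inp m) p1, path e a p2, last a p2 = o, uniq (inp m :: p1) &
      uniq p2 /\ ~~ has (mem (inp m :: p1)) p2].
Proof.
rewrite /io_path /simple_path cat_path last_cat -cat_cons cat_uniq => /and3P[/andP[P1 P2] /eqP L /and3P[U1 H U2]] E.
by rewrite E in P2 L; split.
Qed.

Lemma a_notin_suf m p1 p2 a : io_path e inp o m (p1 ++ p2) -> last (inp m) p1 = a ->
  a \notin p2.
Proof.
move=> io E; case: (io_split io E) => _ _ _ _ [_ /hasPn H].
by apply/negP => /H; rewrite -E; case/negP; apply: mem_last.
Qed.

Lemma suffix_avoid m p1 p2 a v : io_path e inp o m (p1 ++ p2) -> last (inp m) p1 = a ->
  v \in p2 -> connect (eR (predC1 a)) v o.
Proof.
move=> io E vin; have aN := a_notin_suf io E.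
case: (io_split io E) => _ P2 L _ _; case/splitPr: vin P2 L aN.
move=> q1 q2; rewrite cat_path last_cat /= => /andP[_ /andP[_ P]] L aN.
rewrite -L; apply: walk_conn => //; apply/allP => z zin /=.
by apply/negP => /eqP Ez; move: aN; rewrite -Ez mem_cat zin orbT.
Qed.

Lemma prefix_avoid m p1 p2 a v : io_path e inp o m (p1 ++ p2) -> last (inp m) p1 = a ->
  v \in inp m :: p1 -> v != a -> connect (eR (predC1 a)) (inp m) v.
Proof.
move=> io E vin va; case: (io_split io E) => P1 _ _ U1 _.
case/splitPl: vin P1 U1 E => q1 q2 Lq; rewrite cat_path last_cat Lq -cat_cons cat_uniq.
move=> /andP[Pq1 _] /and3P[_ /hasPn H _] E.
rewrite -Lq; apply: walk_conn => //; apply/allP => z zin /=.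
apply/negP => /eqP Ez; move: zin; rewrite Ez => zin.
case: q2 E H => [|y q2] /=; first by move=> E; rewrite E eqxx in va.
move=> E H; have : a \in y :: q2.
  have := mem_last y q2; by rewrite E.
by move/H; rewrite zin.
Qed.

Lemma splice a m m' p1 p2 q1 q2 : abs_super_simple e inp o a ->
  io_path e inp o m (p1 ++ p2) -> last (inp m) p1 = a ->
  io_path e inp o m' (q1 ++ q2) -> last (inp m') q1 = a ->
  io_path e inp o m (p1 ++ q2).
Proof.
move=> ss iop Ep ioq Eq.
case: (io_split iop Ep) => P1 _ _ U1 _.
case: (io_split ioq Eq) => _ Q2 L2 _ [U2 _].
rewrite /io_path /simple_path cat_path last_cat Ep P1 Q2 L2 eqxx -cat_cons cat_uniq U1 U2 andbT /=.
rewrite andbT; apply/hasPn => w wq2; apply/negP => wp1.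
have wa : w != a by apply/negP => /eqP E; move: (a_notin_suf ioq Eq); rewrite -E wq2.
apply: (@noavoidC a m ss); apply: connect_trans (prefix_avoid iop Ep wp1 wa) _.
exact: suffix_avoid ioq Eq wq2.
Qed.


Lemma split_at m p x : io_path e inp o m p -> x \in inp m :: p ->
  exists p1 p2, p = p1 ++ p2 /\ last (inp m) p1 = x.
Proof. by move=> _ /splitPl[p1 p2 L]; exists p1, p2. Qed.

Lemma on_path m p x : io_path e inp o m p -> x \in inp m :: p ->
  connect e (inp m) x /\ connect e x o.
Proof.
move=> io xin; have [p1 [p2 [Ep Lp]]] := split_at io xin; subst p.
have [P1 P2 L2 _ _] := io_split io Lp.
split; apply/connectP; [exists p1 | exists p2] => //.
Qed.

Lemma restr_path (X Y : pred V) r :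
  (forall u, X u -> connect (eR X) u r -> connect (eR X) r u -> Y u) ->
  forall p x, connect (eR X) r x -> path (eR X) x p -> connect (eR X) (last x p) r ->
  path (eR Y) x p.
Proof.
move=> H; elim=> [|z p IH] x crx //= /andP[exz pp] cl.
have exz' : eR X x z := exz.
have czr : connect (eR X) z r.
  have w : connect (eR X) z (last z p) by apply/connectP; exists p.
  exact: connect_trans w cl.
have crz : connect (eR X) r z by apply: connect_trans crx (@connect1 _ (eR X) x z exz').
move: (exz) => /and3P[e0 Xx Xz].
rewrite /= e0 (H x Xx) ?(H z Xz) //=; first exact: IH.
exact: connect_trans (@connect1 _ (eR X) x z exz') czr.
Qed.

Lemma restr (X Y : pred V) r x y :
  (forall u, X u -> connect (eR X) u r -> connect (eR X) r u -> Y u) ->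
  connect (eR X) r x -> connect (eR X) x y -> connect (eR X) y r -> connect (eR Y) x y.
Proof.
move=> H crx /connectP[p pp ->] cl; apply/connectP; exists p => //.
exact: restr_path H _ _ crx pp cl.
Qed.


Lemma io_uniq m p : io_path e inp o m p -> uniq (inp m :: p).
Proof. by case/and3P. Qed.

Lemma L1 a b m m' v : (exists t, io_path e inp o m t) -> abs_super_simple e inp o a ->
  Lm e inp o m' a b v -> Lm e inp o m a b v.
Proof.
move=> [t iot] ss [p [iop H]]; case: H => ain vin bin /andP[H1 H2].
have [p1 [p2 [Ep Lp]]] := split_at iop ain; subst p.
have [t1 [t2 [Et Lt]]] := split_at iot (ss m t iot); subst t.
have ion := splice ss iot Lt iop Lp.
exists (t1 ++ p2); split => //; cbv zeta.
have Us := io_uniq iop; have Us' := io_uniq ion.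
have H3 := leq_trans H1 H2.
move: Us ain vin bin H1 H2 H3; rewrite !(decomp p2 Lp) => Us ain vin bin.
have aa : a \in a :: p2 by rewrite mem_head.
rewrite (IDX Us aa vin) => /andP[vin2 i1].
rewrite (IDX Us vin2 bin) => /andP[bin2 i2] _.
move: Us'; rewrite !(decomp p2 Lt) => Us'.
have [ain' vin' bin'] : [/\ a \in belast (inp m) t1 ++ a :: p2,
   v \in belast (inp m) t1 ++ a :: p2 & b \in belast (inp m) t1 ++ a :: p2].
  by rewrite !mem_cat aa vin2 bin2 !orbT.
by rewrite (IDX Us' aa vin') (IDX Us' vin2 bin') vin2 bin2 i1 i2.
Qed.



Lemma r_to_o a b m r : abs_super_simple e inp o a -> Lm e inp o m a b r -> r != a ->
  connect (eR (predC1 a)) r o.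
Proof.
move=> ss [p [iop H]]; case: H => ain rin _ /andP[H1 _] ra.
have [p1 [p2 [Ep Lp]]] := split_at iop ain; subst p.
have Us := io_uniq iop.
move: Us rin H1; rewrite !(decomp p2 Lp) => Us rin.
rewrite (IDX Us (mem_head a p2) rin) => /andP[]; rewrite inE (negbTE ra) /= => rp2 _.
exact: suffix_avoid iop Lp rp2.
Qed.

Lemma simple_after a m m' q1 q2 v : (exists t, io_path e inp o m t) ->
  abs_super_simple e inp o a ->
  io_path e inp o m' (q1 ++ q2) -> last (inp m') q1 = a -> v \in a :: q2 ->
  is_simple e inp o m v.
Proof.
move=> [t iot] ss ioq Lq vin.
have [t1 [t2 [Et Lt]]] := split_at iot (ss m t iot); subst t.
exists (t1 ++ q2); split; first exact: splice ss iot Lt ioq Lq.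
move: vin; rewrite inE => /orP[/eqP ->|vq].
  by rewrite -cat_cons mem_cat -Lt mem_last.
by rewrite -cat_cons mem_cat vq orbT.
Qed.


Lemma main (rk rk1 : V) :
  core_network e inp o ->
  adjacent_abs_ss e inp o rk rk1 ->
  forall m : 'I_n,
    (forall v : V, Lpm_node e inp o m rk rk1 v <-> Lp_node e inp o rk rk1 v) /\
    (forall x y : V, Lpm_arrow e inp o m rk rk1 x y <-> Lp_arrow e inp o rk rk1 x y).
Proof.
move=> core [ssa _ _ _] m.
have Hex : forall m', exists t, io_path e inp o m' t.
  by move=> m'; apply: ex_path; case: (core (inp m')).
have LmLabs : forall m' v, Lm e inp o m' rk rk1 v -> Labs e inp o rk rk1 v.
  move=> m' v H; split; last by exists m'.
  move=> m''; have [p [iop [_ vin _ _]]] := L1 (Hex m'') ssa H.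
  by exists p.
have LabsLm : forall v, Labs e inp o rk rk1 v -> Lm e inp o m rk rk1 v.
  by move=> v [_ [m' H]]; apply: L1 (Hex m) ssa H.
have LmG : forall m' r, Lm e inp o m' rk rk1 r -> connect e (inp m) r /\ connect e r o.
  move=> m' r H; have [p [iop [_ rin _ _]]] := L1 (Hex m) ssa H.
  exact: on_path iop rin.
have nodeLR : forall v, Lpm_node e inp o m rk rk1 v -> Lp_node e inp o rk rk1 v.
  move=> v [Hl|[app [p [r [iop Lr pe]]]]]; first by left; apply: LmLabs Hl.
  right; case: pe => vK rK cvr crv.
  have rnS : r \notin inp m :: p by move: rK; rewrite inE => /andP[].
  have anr : r != rk by apply/negP => /eqP E; move: rnS; rewrite E (ssa m p iop).
  split; last first.
    exists m, p, r; split => //; first exact: LmLabs Lr.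
    have sub : forall z, z \in CmS e inp o m p -> z \in CS inp m p.
      by move=> z; rewrite !inE => /andP[].
    split; try exact: sub.
      exact: (conn_mono sub cvr).
    exact: (conn_mono sub crv).
  move=> m'; split.
    have [p' [iop' [_ rin _ _]]] := L1 (Hex m') ssa Lr.
    apply: connect_trans (on_path iop' rin).1 _.
    exact: conn_eR_e crv.
  move=> [q [ioq vin]].
  have [q1 [q2 [Eq Lq]]] := split_at ioq (ssa m' q ioq); subst q.
  move: vin; rewrite -cat_cons mem_cat => /orP[vq1|vq2]; last first.
    by apply: app.2; apply: simple_after (Hex m) ssa ioq Lq _; rewrite inE vq2 orbT.
  case: (eqVneq v rk) => [Ev|va].
    by apply: app.2; apply: simple_after (Hex m) ssa ioq Lq _; rewrite Ev mem_head.
  apply: (@noavoidC rk m' ssa).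
  apply: connect_trans (prefix_avoid ioq Lq vq1 va) _.
  apply: connect_trans (r_to_o ssa Lr anr).
  apply: conn_mono cvr => z; rewrite inE /= => /andP[_ zS].
  by apply/negP => /eqP Ez; move: zS; rewrite Ez (ssa m p iop).
have nodeRL : forall v, Lp_node e inp o rk rk1 v -> Lpm_node e inp o m rk rk1 v.
  move=> v [Hl|[aapp [m' [q [r [ioq Lr pe]]]]]]; first by left; apply: LabsLm Hl.
  right; split; first exact: aapp m.
  have Lrm := LabsLm _ Lr.
  have [t iot] := Hex m.
  have [t1 [t2 [Et Lt]]] := split_at iot (ssa m t iot); subst t.
  have [q1 [q2 [Eq Lq]]] := split_at ioq (ssa m' q ioq); subst q.
  have iop := splice ssa iot Lt ioq Lq.
  exists (t1 ++ q2), r; split => //.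
  case: pe => vK rK cvr crv.
  have aK : forall z, z \in CS inp m' (q1 ++ q2) -> z != rk.
    by move=> z; rewrite inE => zn; apply/negP => /eqP Ez; move: zn; rewrite Ez (ssa m' _ ioq).
  have anr : r != rk by apply: aK.
  have cond : forall u, u \in CS inp m' (q1 ++ q2) ->
      connect (eR (fun z => z \in CS inp m' (q1 ++ q2))) u r ->
      connect (eR (fun z => z \in CS inp m' (q1 ++ q2))) r u ->
      u \in CmS e inp o m (t1 ++ q2).
    move=> u uK cur cru; rewrite inE; apply/andP; split.
      have [G1 G2] := LmG _ _ Lrm.
      rewrite /inGm /downstream; apply/andP; split.
        exact: connect_trans G1 (conn_eR_e cru).
      exact: connect_trans (conn_eR_e cur) G2.
    rewrite -cat_cons mem_cat negb_or; apply/andP; split; last first.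
      by apply/negP => uq2; move: uK; rewrite inE -cat_cons mem_cat uq2 orbT.
    apply/negP => ut1.
    apply: (@noavoidC rk m ssa).
    apply: connect_trans (prefix_avoid iot Lt ut1 (aK _ uK)) _.
    apply: connect_trans (r_to_o ssa Lrm anr).
    apply: conn_mono cur => z /=; exact: aK.
  split.
  - exact: cond v vK cvr crv.
  - exact: cond r rK (connect0 _ _) (connect0 _ _).
  - exact: restr cond crv cvr (connect0 _ _).
  - exact: restr cond (connect0 _ _) crv cvr.
have inG : forall x, Lp_node e inp o rk rk1 x -> inGm e inp o m x.
  move=> x [Hl|[_ [m' [q [r [ioq Lr pe]]]]]].
    have [p [iop xin]] := Hl.1 m; have [G1 G2] := on_path iop xin.
    by rewrite /inGm /downstream G1 G2.
  have [G1 G2] := LmG _ _ (LabsLm _ Lr); case: pe => _ _ cxr crx.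
  rewrite /inGm /downstream; apply/andP; split.
    exact: connect_trans G1 (conn_eR_e crx).
  exact: connect_trans (conn_eR_e cxr) G2.
split=> [v|x y]; first by split; [apply: nodeLR | apply: nodeRL].
split; first by case=> exy nx ny _ _; split => //; apply: nodeLR.
case=> exy nx ny; split => //; try apply: nodeRL => //; exact: inG.
Qed.

End Aux.

Theorem lemma3p23 (V : finType) (e : rel V) (n : nat) (inp : 'I_n -> V) (o : V)
  (rk rk1 : V) :
  well_formed_io inp o ->
  core_network e inp o ->
  adjacent_abs_ss e inp o rk rk1 ->
  forall m : 'I_n,
    (forall v : V, Lpm_node e inp o m rk rk1 v <-> Lp_node e inp o rk rk1 v) /\
    (forall x y : V, Lpm_arrow e inp o m rk rk1 x y <-> Lp_arrow e inp o rk rk1 x y).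
Proof. by move=> [_ inpNo]; apply: main. Qed.
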